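(* Let $A=(a_{ij})\in M(m,\mathbb{C})$ and let $X_A$ be a complex algebra spanned by elements $\{x_{ij}:i,j=1,\ldots,m\}$ satisfying $x_{ij}x_{kl}=a_{jk}x_{il}$. Suppose the elements $x_{ij}$ are linearly independent and $\det A=0$. Then $X_A$ contains a nonzero properly nilpotent element, and consequently $X_A$ is not semisimple.
   Context: An element $z$ of an algebra $\mathcal{X}$ is properly nilpotent if $zx$ (equivalently, $xz$) is nilpotent for every $x\in\mathcal{X}$. An algebra is semisimple if its Jacobson radical (the set of properly nilpotent elements, for finite-dimensional algebras) is zero. *)

(* Defs.v *)
From HB Require Import structures.
From mathcomp Require Import all_boot all_order all_algebra.
From mathcomp Require Import reals.
From mathcomp Require Import complex.
Set Implicit Arguments. Unset Strict Implicit. Unset Printing Implicit Defensive.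
Import Order.TTheory GRing.Theory Num.Theory.
Local Open Scope ring_scope.

Definition is_assoc_algebra (K : comNzRingType) (V : lmodType K)
  (mul : V -> V -> V) : Prop :=
  [/\ forall x y z, mul x (mul y z) = mul (mul x y) z,
      forall x y z, mul (x + y) z = mul x z + mul y z,
      forall x y z, mul x (y + z) = mul x y + mul x z,
      forall (a : K) x y, mul (a *: x) y = a *: mul x y
    & forall (a : K) x y, mul x (a *: y) = a *: mul x y].

(* Powers in a possibly non-unital algebra: w^1 = w, w^(n+2) = w * w^(n+1). *)
Fixpoint apow (V : Type) (mul : V -> V -> V) (w : V) (n : nat) : V :=
  match n with
  | 0 => w
  | n'.+1 => mul w (apow mul w n')
  end.

Definition nilpotent_elt (K : comNzRingType) (V : lmodType K)
  (mul : V -> V -> V) (w : V) : Prop := exists n, apow mul w n = 0.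

Definition properly_nilpotent (K : comNzRingType) (V : lmodType K)
  (mul : V -> V -> V) (z : V) : Prop :=
  forall x, nilpotent_elt mul (mul z x).

(* Semisimple (finite-dimensional): the Jacobson radical, i.e. the set of
   properly nilpotent elements, is zero. *)
Definition semisimple (K : comNzRingType) (V : lmodType K)
  (mul : V -> V -> V) : Prop :=
  forall z, properly_nilpotent mul z -> z = 0.

(* Main.v *)
Require Import Defs.
From HB Require Import structures.
From mathcomp Require Import all_boot all_order all_algebra.
From mathcomp Require Import reals.
From mathcomp Require Import complex.
Import Order.TTheory GRing.Theory Num.Theory.
Local Open Scope ring_scope.

Lemma mul_suml (K : comNzRingType) (V : lmodType K) (mul : V -> V -> V)
  (H : is_assoc_algebra mul) (I : Type) (r : seq I) (P : pred I) (F : I -> V) w :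
  mul (\sum_(i <- r | P i) F i) w = \sum_(i <- r | P i) mul (F i) w.
Proof.
case: H => _ HDl _ _ _.
have H0 : mul 0 w = 0.
  have e : mul 0 w + mul 0 w = mul 0 w + 0 by rewrite -HDl !addr0.
  exact: addrI e.
by apply: (big_morph (fun u => mul u w)) => // a b; rewrite HDl.
Qed.

Lemma mul_sumr (K : comNzRingType) (V : lmodType K) (mul : V -> V -> V)
  (H : is_assoc_algebra mul) (I : Type) (r : seq I) (P : pred I) (F : I -> V) w :
  mul w (\sum_(i <- r | P i) F i) = \sum_(i <- r | P i) mul w (F i).
Proof.
case: H => _ _ HDr _ _.
have H0 : mul w 0 = 0.
  have e : mul w 0 + mul w 0 = mul w 0 + 0 by rewrite -HDr !addr0.
  exact: addrI e.
by apply: (big_morph (fun u => mul w u)) => // a b; rewrite HDr.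
Qed.

Theorem theorem32 (R : realType) (m : nat) (A : 'M[R[i]]_m)
  (X : lmodType R[i]) (mul : X -> X -> X) (x : 'I_m -> 'I_m -> X)
  (Halg : is_assoc_algebra mul)
  (Hspan : forall v : X, exists c : 'I_m -> 'I_m -> R[i],
      v = \sum_(i < m) \sum_(j < m) c i j *: x i j)
  (Hindep : forall c : 'I_m -> 'I_m -> R[i],
      \sum_(i < m) \sum_(j < m) c i j *: x i j = 0 ->
      forall i j, c i j = 0)
  (Hrel : forall i j k l, mul (x i j) (x k l) = A j k *: x i l)
  (Hdet : \det A = 0) :
  (exists z : X, z != 0 /\ properly_nilpotent mul z) /\ ~ semisimple mul.
Proof.
have [v vn0 vA0] : exists2 v : 'rV[R[i]]_m, v != 0 & v *m A = 0.
  by apply/det0P/eqP.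
have [j0 vj0] : exists j0, v 0 j0 != 0.
  apply/existsP; apply: contraR vn0 => /existsPn H.
  by apply/eqP/matrixP => a b; rewrite ord1 mxE; apply/eqP/negPn/H.
pose c i j := if i == j0 then v 0 j else 0.
pose z := \sum_(i < m) \sum_(j < m) c i j *: x i j.
have Hzx : forall k l, mul z (x k l) = 0.
  move=> k l; rewrite /z mul_suml //.
  apply: big1 => i _; rewrite mul_suml //.
  case: Halg => _ _ _ HZl _.
  under eq_bigr => j _ do rewrite HZl Hrel scalerA.
  rewrite -scaler_suml.
  have -> : \sum_(j < m) c i j * A j k = 0.
    rewrite /c; case: eqP => _; last by apply: big1 => j _; rewrite mul0r.
    have := congr1 (fun M : 'rV[R[i]]_m => M 0 k) vA0; rewrite /= !mxE => E; exact: E.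
  by rewrite scale0r.
have Hz : forall w, mul z w = 0.
  move=> w; have [d ->] := Hspan w.
  rewrite mul_sumr //; apply: big1 => i _; rewrite mul_sumr //.
  apply: big1 => j _; case: Halg => _ _ _ _ HZr.
  by rewrite HZr Hzx scaler0.
have zn0 : z != 0.
  apply/eqP => /Hindep /(_ j0 j0); rewrite /c eqxx => /eqP; exact/negP.
have pn : properly_nilpotent mul z by move=> w; exists 0%N; rewrite /= Hz.
split; first by exists z.
by move=> Hs; move/eqP: zn0; apply; exact: Hs.
Qed.
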